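(* Let $G=(V,E)$ be a finite graph (parallel edges and loops allowed) and $e\neq f$ edges of $G$, and let $E^{ef}=E\setminus\{e,f\}$. The coefficient of the monomial $\prod_{g\in E^{ef}}x_g$ in $\mathcal{M}_{ef}(1)$ equals the number of paracels $F\subseteq E^{ef}$ of $G$.
   Context: Let $\{x_g : g\in E\}$ be variables. For $F\subseteq E$, $\mathbf{x}^F=\prod_{g\in F}x_g$ and $k(F)$ is the number of connected components of $(V,F)$. For $A,B\subseteq E$, $\mathcal{T}_A^B=\sum_{F\subseteq E:\,A\subseteq F,\,F\cap B=\varnothing}\mathbf{x}^F q^{k(F)}$; $\mathcal{T}_e^f=\mathcal{T}_{\{e\}}^{\{f\}}$, $\mathcal{T}_f^e=\mathcal{T}_{\{f\}}^{\{e\}}$, $\mathcal{T}_{ef}=\mathcal{T}_{\{e,f\}}^{\varnothing}$, $\mathcal{T}^{ef}=\mathcal{T}_{\varnothing}^{\{e,f\}}$, and $\mathcal{M}_{ef}(q)=(\mathcal{T}_e^f\mathcal{T}_f^e-\mathcal{T}_{ef}\mathcal{T}^{ef})/(x_ex_f(1-q))$, which is a polynomial; $\mathcal{M}_{ef}(1)$ is its value at $q=1$. A subset $F\subseteq E^{ef}$ is a paracel if $e$ and $f$ both join the same two distinct connected components of $(V,F)$; equivalently $(V,F+e)$ and $(V,F+f)$ have the same connected components and $k(F+e)=k(F+f)=k(F)-1$. *)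

(* Defs.v *)
From HB Require Import structures.
From mathcomp Require Import all_boot all_order all_algebra.
From mathcomp Require Import mpoly.
Set Implicit Arguments. Unset Strict Implicit. Unset Printing Implicit Defensive.
Import GRing.Theory.
Local Open Scope ring_scope.

(* A finite multigraph G = (V,E): E = 'I_m, edge g has endpoints ends g
   (parallel edges and loops allowed). *)

Definition adjF (V : finType) (m : nat) (ends : 'I_m -> V * V)
  (F : {set 'I_m}) : rel V :=
  fun u v => [exists g in F, (ends g == (u, v)) || (ends g == (v, u))].

Definition kcomp (V : finType) (m : nat) (ends : 'I_m -> V * V)
  (F : {set 'I_m}) : nat :=
  #|[set [set y | connect (adjF ends F) x y] | x : V]|.

Definition xF (m : nat) (F : {set 'I_m}) : {mpoly int[m]} :=
  \prod_(g in F) 'X_g.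

(* T_A^B as a polynomial in q with coefficients in Z[x_g : g in E] *)
Definition Tpoly (V : finType) (m : nat) (ends : 'I_m -> V * V)
  (A B : {set 'I_m}) : {poly {mpoly int[m]}} :=
  \sum_(F : {set 'I_m} | (A \subset F) && [disjoint F & B])
     (xF F)%:P * 'X^(kcomp ends F).

Definition is_Mef (V : finType) (m : nat) (ends : 'I_m -> V * V)
  (e f : 'I_m) (M : {poly {mpoly int[m]}}) : Prop :=
  (xF [set e; f])%:P * (1 - 'X) * M =
    Tpoly ends [set e] [set f] * Tpoly ends [set f] [set e]
    - Tpoly ends [set e; f] set0 * Tpoly ends set0 [set e; f].

Definition mon_ef (m : nat) (e f : 'I_m) : 'X_{1..m} :=
  [multinom (if (i != e) && (i != f) then 1%N else 0%N) | i < m].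

Definition paracel (V : finType) (m : nat) (ends : 'I_m -> V * V)
  (e f : 'I_m) (F : {set 'I_m}) : bool :=
  let c := connect (adjF ends F) in
  let a := (ends e).1 in let b := (ends e).2 in
  let a' := (ends f).1 in let b' := (ends f).2 in
  [&& F \subset ~: [set e; f], ~~ c a b &
      (c a a' && c b b') || (c a b' && c b a')].

(* Main.v *)
Require Import Defs.
From HB Require Import structures.
From mathcomp Require Import all_boot all_order all_algebra.
From mathcomp Require Import mpoly.
From mathcomp Require Import zify ring lra.
Local Open Scope ring_scope.

Module Helpers.
Set Implicit Arguments. Unset Strict Implicit. Unset Printing Implicit Defensive.
Import GRing.Theory.
Section Graph.
Variables (V : finType) (m : nat) (ends : 'I_m -> V * V).

Lemma adjF_sym F : ssrbool.symmetric (adjF ends F).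
Proof.
move=> u v; apply/existsP/existsP => -[g /andP[gF h]]; exists g;
  by rewrite gF /= orbC.
Qed.

Lemma cF_sym F : connect_sym (adjF ends F).
Proof. exact/sym_connect_sym/adjF_sym. Qed.

Lemma connect_le (T : finType) (r : rel T) (R : rel T) :
  reflexive R -> transitive R -> subrel r R -> subrel (connect r) R.
Proof.
move=> Rr Rt sub x y /connectP[p]; elim: p x => [|z p IH] x /=.
  by move=> _ ->.
by case/andP=> /sub xz /IH h /h; apply: Rt.
Qed.

Lemma adjF_mono F g : subrel (connect (adjF ends F)) (connect (adjF ends (g |: F))).
Proof.
apply: connect_sub => u v /existsP[h /andP[hF hh]]; apply: connect1.
by apply/existsP; exists h; rewrite !inE hF orbT.
Qed.

Lemma connect_add F g x y :
  let c := connect (adjF ends F) in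
  let a := (ends g).1 in let b := (ends g).2 in
  connect (adjF ends (g |: F)) x y =
    c x y || ((c x a || c x b) && (c y a || c y b)).
Proof.
move=> c a b.
have cs : forall u v, c u v = c v u := cF_sym F.
have ct : transitive c by move=> ? ? ? ; apply: connect_trans.
have Aeq : forall u v, c u v -> (c u a || c u b) = (c v a || c v b).
  move=> u v huv; apply/idP/idP => /orP[] h.
  - by rewrite (ct u) // cs.
  - by rewrite orbC (ct u) // cs.
  - by rewrite (ct v).
  - by rewrite orbC (ct v).
apply/idP/idP.
  apply: (@connect_le _ _ (fun u v => c u v || ((c u a || c u b) && (c v a || c v b)))) => [u|v u w|u v].
  - by rewrite /c connect0.
  - case/orP=> [huv | /andP[Au Av]] /orP[hvw | /andP[Av' Aw]].
    + by rewrite (ct v).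
    + by rewrite (Aeq _ _ huv) Av' Aw orbT.
    + by rewrite -(Aeq _ _ hvw) Au Av orbT.
    + by rewrite Au Aw orbT.
  - case/existsP=> h /andP[]; rewrite !inE => /orP[/eqP-> |hF] hh.
    + case/orP: hh => /eqP E; rewrite /a /b E /=.
      * by rewrite /c !connect0 !orbT.
      * by rewrite /c !connect0 !orbT.
    + by rewrite /c connect1 //; apply/existsP; exists h; rewrite hF.
set c' := connect (adjF ends (g |: F)).
have cs' : forall u v, c' u v = c' v u := cF_sym (g |: F).
have ab : c' a b by apply: connect1; apply/existsP; exists g; rewrite !inE eqxx /= -surjective_pairing eqxx.
have toa : forall u, c u a || c u b -> c' u a.
  move=> u /orP[] h; first exact: adjF_mono.
  by apply: (connect_trans (adjF_mono g h)); rewrite -/c' cs'.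
case/orP=> [|/andP[hx hy]]; first exact: adjF_mono.
by apply: (connect_trans (toa _ hx)); rewrite -/c' cs'; apply: toa.
Qed.


Lemma kcomp_add F g :
  kcomp ends F = (kcomp ends (g |: F) + ~~ connect (adjF ends F) (ends g).1 (ends g).2)%N.
Proof.
have CA := connect_add F g.
rewrite /kcomp.
set c := connect (adjF ends F) in CA *.
set c' := connect (adjF ends (g |: F)) in CA *.
set a := (ends g).1 in CA *. set b := (ends g).2 in CA *.
have cs : forall u v, c u v = c v u := cF_sym F.
have cs' : forall u v, c' u v = c' v u := cF_sym (g |: F).
have ct : transitive c by move=> ? ? ? ; apply: connect_trans.
have ct' : transitive c' by move=> ? ? ? ; apply: connect_trans.
have cl_eq : forall (r : rel V), (forall u v, r u v = r v u) -> transitive r ->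
   forall u v, r u v -> [set y | r u y] = [set y | r v y].
  move=> r rs rt u v uv; apply/setP => y; rewrite !inE; apply/idP/idP => h.
    by apply: (rt u); rewrite // rs.
  exact: (rt v).
have cl_eq' : forall (r : rel V), reflexive r -> forall u v,
   [set y | r u y] = [set y | r v y] -> r u v.
  by move=> r rr u v /setP/(_ v); rewrite !inE rr.
have cr : reflexive c by move=> ?; exact: connect0.
have cr' : reflexive c' by move=> ?; exact: connect0.
case: (boolP (c a b)) => hab /=.
  rewrite addn0; apply: eq_card => C.
  suff key : forall x, [set y | c x y] = [set y | c' x y].
    by apply/imsetP/imsetP => -[x _ ->]; exists x; rewrite ?key.
  move=> x; apply/setP => y.
  rewrite !inE CA; case: (boolP (c x y)) => //= hxy.
  apply/esym/negbTE/negP => /andP[] /orP[hxa|hxb] /orP[hya|hyb]; move/negP: hxy; apply.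
  - by apply: (ct a) => //; rewrite cs.
  - by apply: (ct a) => //; apply: (ct b) => //; rewrite cs.
  - by apply: (ct b) => //; apply: (ct a) => //; rewrite cs.
  - by apply: (ct b) => //; rewrite cs.
set Cl := [set _ | x : V]. set Cl' := [set _ | x : V].
set Ca := [set y | c a y]. set Cb := [set y | c b y].
set Cab := [set y | c' a y].
have Aa : forall x, c x a || c x b -> Cab = [set y | c' x y].
  move=> x hx; apply: cl_eq => //; rewrite cs'.
  case/orP: hx => h.
    by rewrite CA h.
  by rewrite CA h cr !orbT.
have Na : forall x, ~~ (c x a || c x b) -> [set y | c' x y] = [set y | c x y].
  by move=> x hx; apply/setP => y; rewrite !inE CA (negbTE hx) andFb orbF.
have CaE : forall x, ([set y | c x y] == Ca) = c x a.
  move=> x; apply/eqP/idP => [/cl_eq'|h]; first by apply.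
  by apply: cl_eq.
have CbE : forall x, ([set y | c x y] == Cb) = c x b.
  move=> x; apply/eqP/idP => [/cl_eq'|h]; first by apply.
  by apply: cl_eq.
have E : Cl' = Cab |: (Cl :\: [set Ca; Cb]).
  apply/setP => C; rewrite !inE; apply/imsetP/idP.
    case=> x _ ->.
    case: (boolP (c x a || c x b)) => hx; first by rewrite (Aa _ hx) eqxx.
    rewrite (Na _ hx) CaE CbE hx /=; apply/orP; right; apply/imsetP; by exists x.
  case/orP=> [/eqP -> | /andP[]]; first by exists a; rewrite // Aa // cr.
  rewrite negb_or => /andP[hCa hCb] /imsetP[x _ Cx].
  exists x => //; rewrite Na ?Cx //.
  by rewrite negb_or -CaE -CbE -Cx hCa hCb.
have nin : Cab \notin Cl :\: [set Ca; Cb].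
  rewrite !inE negb_or; apply/negP => /andP[/andP[nCa nCb] /imsetP[x _ Cx]].
  have : a \in Cab by rewrite inE cr'.
  rewrite Cx inE => hxa.
  by move: nCa; rewrite Cx CaE hxa.
have sub : [set Ca; Cb] \subset Cl.
  by apply/subsetP => C; rewrite !inE => /orP[]/eqP->; apply/imsetP; [exists a|exists b].
have neq : Ca != Cb by rewrite /Ca CbE.
have le2 := subset_leq_card sub.
rewrite cards2 neq in le2.
rewrite E cardsU1 nin cardsD (setIidPr sub) cards2 neq.
have t1 : nat_of_bool true = 1%N by []. rewrite t1 in le2 *.
move: (#|Cl|) le2 => n le2; lia.
Qed.


Lemma term_eq (e f : 'I_m) (S : {set 'I_m}) : S \subset ~: [set e; f] ->
  ((kcomp ends ([set e; f] :|: S) : int) - (kcomp ends ([set e] :|: S) : int)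
   + (kcomp ends (set0 :|: S) : int) - (kcomp ends ([set f] :|: S) : int))%R
  = (paracel ends e f S : nat)%:R%R.
Proof.
move=> hS.
rewrite set0U -setUA.
have k1 := kcomp_add S e. have k2 := kcomp_add (f |: S) e.
rewrite k1 k2 !PoszD.
have CA := connect_add S f (ends e).1 (ends e).2.
rewrite CA /paracel hS /=.
set c := connect (adjF ends S) in CA *.
have cs : forall u v, c u v = c v u := cF_sym S.
have ct : transitive c by move=> ? ? ? ; apply: connect_trans.
set a := (ends e).1. set b := (ends e).2. set a' := (ends f).1. set b' := (ends f).2.

have -> : forall x y z w : int, (x - y + (y + z) - (x + w) = z - w)%R.
  by move=> x y z w; ring.
case: (boolP (c a b)) => hab //=.
case: (boolP (c a a')) => haa /=.
  have -> : c b a' = false.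
    by apply/negbTE/negP => h; move/negP: hab; apply; apply: (ct a') => //; rewrite cs.
  by case: (c b b'); rewrite /= ?orbT ?orbF ?andbF /= ?subr0 ?subrr.
case: (boolP (c a b')) => hab' //=.
have -> : c b b' = false.
  by apply/negbTE/negP => h; move/negP: hab; apply; apply: (ct b') => //; rewrite cs.
by rewrite orbF; case: (c b a'); rewrite /= ?orbT ?orbF ?andbF /= ?subr0 ?subrr.
Qed.

End Graph.
Lemma disjP (T : finType) (A B : {set T}) :
  reflect (forall x, x \in A -> x \in B -> False) [disjoint A & B].
Proof.
rewrite disjoint_subset; apply: (iffP subsetP) => H x.
  by move=> xA xB; move: (H x xA); rewrite inE xB.
by move=> xA; rewrite inE; apply/negP => xB; exact: H x xA xB.
Qed.

Section Poly.
Variables (V : finType) (m : nat) (ends : 'I_m -> V * V).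

Lemma algid (R : comRingType) (A B C D P1 P2 P3 P4 : R) :
  A * B * (C * D) * (P1 * P2 - P3 * P4) =
  A * C * P1 * (B * D * P2) - A * B * C * P3 * (D * P4).
Proof. ring. Qed.

Lemma xFU (A B : {set 'I_m}) : [disjoint A & B] -> xF (A :|: B) = xF A * xF B.
Proof.
move=> dAB; rewrite /xF -bigU //; apply: eq_bigl => i; by rewrite !inE.
Qed.

Lemma xF0 : xF (set0 : {set 'I_m}) = 1.
Proof. by rewrite /xF big_set0. Qed.

Lemma Tsplit (A B C : {set 'I_m}) : [disjoint A & B] -> A :|: B = C ->
  Tpoly ends A B = \sum_(S : {set 'I_m} | S \subset ~: C)
      (xF A * xF S)%:P * 'X^(kcomp ends (A :|: S)).
Proof.
move=> dAB hC; rewrite /Tpoly.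
rewrite (reindex_onto (fun S => A :|: S) (fun F => F :&: ~: C)); last first.
  move=> F /andP[sAF dFB]; apply/setP => i; rewrite !inE -hC !inE.
  move/subsetP: sAF => /(_ i); move/disjP: dFB => /(_ i).
  case: (i \in A); case: (i \in B); case: (i \in F) => //= H1 H2; try by [exfalso; exact: H1 | rewrite H2].
transitivity (\sum_(S : {set 'I_m} | S \subset ~: C)
      (xF (A :|: S))%:P * 'X^(kcomp ends (A :|: S))).
  apply: eq_bigl => S.
  apply/idP/idP.
    case/andP=> /andP[_ dSB] /eqP <-; apply/subsetP => i; by rewrite !inE => /andP[].
  move=> sSC; rewrite subsetUl /=; apply/andP; split.
    apply/disjP => i; rewrite inE => /orP[iA|iS] iB.
      by move/disjP: dAB => /(_ i iA iB).
    by move/subsetP: sSC => /(_ i iS); rewrite !inE -hC !inE iB orbT.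
  apply/eqP/setP => i; rewrite !inE -hC !inE.
  move/subsetP: sSC => /(_ i); rewrite !inE -hC !inE.
  by case: (i \in A); case: (i \in B); case: (i \in S) => //= ->.
apply: eq_bigr => S sSC; rewrite xFU //; apply/disjP => i iA iS.
by move/subsetP: sSC => /(_ i iS); rewrite !inE -hC !inE iA.
Qed.


Definition geom (n : nat) : {poly {mpoly int[m]}} := \sum_(i < n) 'X^i.

Lemma geomP n : (1 - 'X) * geom n = 1 - 'X^n.
Proof.
elim: n => [|n IH]; first by rewrite /geom big_ord0 mulr0 expr0 subrr.
rewrite /geom big_ord_recr /= mulrDr -/(geom n) IH exprS; ring.
Qed.

Definition Dp (a b : nat) := geom b - geom a.

Lemma DpP a b : (1 - 'X) * Dp a b = 'X^a - 'X^b.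
Proof. rewrite /Dp mulrBr !geomP; ring. Qed.

Definition Ef (e f : 'I_m) := ~: [set e; f].

Definition Mdef (e f : 'I_m) : {poly {mpoly int[m]}} :=
  \sum_(S : {set 'I_m} | S \subset Ef e f) \sum_(S' : {set 'I_m} | S' \subset Ef e f)
    (xF S * xF S')%:P *
      Dp (kcomp ends ([set e] :|: S) + kcomp ends ([set f] :|: S'))
         (kcomp ends ([set e; f] :|: S) + kcomp ends (set0 :|: S')).

Lemma disj_ef (e f : 'I_m) : e != f -> [disjoint [set e] & [set f]].
Proof.
move=> hef; apply/disjP => x; rewrite !inE => /eqP -> /eqP efq.
by rewrite efq eqxx in hef.
Qed.

Lemma disj0 (A : {set 'I_m}) : [disjoint A & set0].
Proof. by apply/disjP => x _; rewrite inE. Qed.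

Lemma disj0l (A : {set 'I_m}) : [disjoint set0 & A].
Proof. by apply/disjP => x; rewrite inE. Qed.

Lemma Mdef_ok (e f : 'I_m) : e != f -> is_Mef ends e f (Mdef e f).
Proof.
move=> hef; rewrite /is_Mef.
have d1 := disj_ef hef.
have d2 : [disjoint [set f] & [set e]] by rewrite disjoint_sym.
have u2 : [set f] :|: [set e] = [set e; f] by rewrite setUC.
rewrite (Tsplit d1 (erefl _)) (Tsplit d2 u2) (Tsplit (disj0 _) (setU0 _)).
rewrite (Tsplit (disj0l _) (set0U _)).
rewrite !big_distrlr -sumrB /Mdef mulr_sumr; apply: eq_bigr => S hS.
rewrite -sumrB mulr_sumr; apply: eq_bigr => S' hS'.
rewrite (xFU (disj_ef hef)) xF0 mul1r /=.
have key : forall (K Z D : {poly {mpoly int[m]}}),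
  K * (1 - 'X) * (Z * D) = K * Z * ((1 - 'X) * D) by move=> *; ring.
rewrite key DpP !exprD !polyCM.
exact: algid.
Qed.

Lemma K_neq0 (e f : 'I_m) : (xF [set e; f])%:P * (1 - 'X) != 0 :> {poly {mpoly int[m]}}.
Proof.
rewrite mulf_neq0 //.
  rewrite polyC_eq0 /xF mprodXE; apply/eqP => h.
  set mm := (\sum_(i in [set e; f]) U_(i))%MM in h.
  have := mcoeffX int mm mm.
  by rewrite h mcoeff0 eqxx.
rewrite -oppr_eq0 opprB; have := polyXsubC_eq0 (1 : {mpoly int[m]}); by rewrite polyC1 => ->.
Qed.

Lemma msum_i (A : {set 'I_m}) i : (\sum_(g in A) U_(g))%MM i = (i \in A).
Proof.
rewrite mnm_sumE; under eq_bigr do rewrite mnm1E.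
case: (boolP (i \in A)) => iA.
  rewrite (bigD1 i) //= eqxx big1 // => g /andP[_ gi]; by rewrite (negbTE gi).
rewrite big1 // => g gA; case: eqP => // gi; by rewrite -gi gA in iA.
Qed.

Lemma coefXX (e f : 'I_m) (S S' : {set 'I_m}) : S \subset Ef e f -> S' \subset Ef e f ->
  mcoeff (mon_ef e f) (xF S * xF S') = (S' == Ef e f :\: S)%:R.
Proof.
move=> /subsetP hS /subsetP hS'.
rewrite /xF !mprodXE -mpolyXD mcoeffX; congr (_ %:R).
congr (nat_of_bool _).
apply/idP/idP => /eqP.
  move/mnmP => H; apply/eqP/setP => i; have := H i; rewrite mnmDE !msum_i mnmE !inE.
  move: (hS i) (hS' i); rewrite !inE.
  by case: (i \in S); case: (i \in S'); case: (i == e); case: (i == f) => //= ; 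
    do ?[move=> /(_ isT) //]; move=> *.
move=> ->; apply/eqP/mnmP => i; rewrite mnmDE !msum_i mnmE !inE.
move: (hS i); rewrite !inE.
by case: (i \in S); case: (i == e); case: (i == f) => //= /(_ isT).
Qed.

Lemma geom1 n : (geom n).[1] = n%:R.
Proof.
rewrite /geom horner_sum; under eq_bigr do rewrite hornerXn expr1n.
by rewrite sumr_const card_ord.
Qed.

Lemma Dp1 a b : (Dp a b).[1] = b%:R - a%:R.
Proof. by rewrite /Dp hornerD hornerN !geom1. Qed.

Lemma reindexD (e f : 'I_m) (g : {set 'I_m} -> int) :
  \sum_(S : {set 'I_m} | S \subset Ef e f) g (Ef e f :\: S) =
  \sum_(S : {set 'I_m} | S \subset Ef e f) g S.
Proof.
have inv : forall S : {set 'I_m}, S \subset Ef e f -> Ef e f :\: (Ef e f :\: S) = S.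
  by move=> S hS; rewrite setDDr setDv set0U; apply/setIidPr.
rewrite [RHS](reindex_onto (fun S => Ef e f :\: S) (fun S => Ef e f :\: S)); last exact: inv.
apply: eq_bigl => S; rewrite subsetDl /=.
apply/idP/eqP => [hS|<-]; first by rewrite inv.
by rewrite setDDr setDv set0U subsetIl.
Qed.

Lemma coefM (e f : 'I_m) :
  mcoeff (mon_ef e f) (Mdef e f).[1] =
  \sum_(S : {set 'I_m} | S \subset Ef e f)
    (((kcomp ends ([set e; f] :|: S) + kcomp ends (set0 :|: (Ef e f :\: S)))%:R
     - (kcomp ends ([set e] :|: S) + kcomp ends ([set f] :|: (Ef e f :\: S)))%:R) : int).
Proof.
rewrite /Mdef horner_sum raddf_sum; apply: eq_bigr => S hS.
rewrite horner_sum raddf_sum.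
have hT : Ef e f :\: S \subset Ef e f by apply: subsetDl.
rewrite (bigD1 (Ef e f :\: S)) //= big1 ?addr0.
  by rewrite hornerCM Dp1 mulrBr !mulr_natr mcoeffB !mcoeffMn coefXX // eqxx.
move=> S' /andP[hS' ne].
by rewrite hornerCM Dp1 mulrBr !mulr_natr mcoeffB !mcoeffMn coefXX // (negbTE ne) /= !mul0rn subrr.
Qed.

End Poly.
End Helpers.
Import Helpers GRing.Theory.

Theorem proposition4p3 (V : finType) (m : nat) (ends : 'I_m -> V * V)
  (e f : 'I_m) (hef : e != f) :
  (exists M : {poly {mpoly int[m]}}, is_Mef ends e f M) /\
  (forall M : {poly {mpoly int[m]}}, is_Mef ends e f M ->
     mcoeff (mon_ef e f) M.[1] = (#|[set F : {set 'I_m} | paracel ends e f F]|)%:R).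
Proof.
split; first by exists (Mdef ends e f); exact: Mdef_ok.
move=> M hM.
have -> : M = Mdef ends e f.
  by apply: (mulfI (K_neq0 e f)); rewrite hM (Mdef_ok ends hef).
rewrite coefM.
have -> : (#|[set F : {set 'I_m} | paracel ends e f F]|)%:R =
   \sum_(S : {set 'I_m} | S \subset Ef e f) ((paracel ends e f S : nat)%:R : int).
  rewrite -sum1_card natr_sum big_mkcond [RHS]big_mkcond; apply: eq_bigr => F _.
  rewrite inE; case: (boolP (paracel ends e f F)) => hp.
    by move: (hp); case/and3P => -> _ _.
  by case: (F \subset Ef e f).
rewrite (eq_bigr (fun S => ((kcomp ends ([set e; f] :|: S))%:R - (kcomp ends ([set e] :|: S))%:R)
   + ((kcomp ends (set0 :|: (Ef e f :\: S)))%:R - (kcomp ends ([set f] :|: (Ef e f :\: S)))%:R)));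
  last by move=> S _; rewrite !natrD; ring.
rewrite big_split /= (reindexD e f (fun T => (kcomp ends (set0 :|: T))%:R - (kcomp ends ([set f] :|: T))%:R)) -big_split.
apply: eq_bigr => S hS; rewrite -(term_eq ends hS) /=.
rewrite !natz; ring.
Qed.
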